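(* Let $U\subset\mathbb{R}^n$ be a bounded domain and let $V$ be an open set with $\overline V\subset U$. Let $(u_1,u_2)$ be a viscosity supersolution of the system (S) in $U$. Assume there is $x_0\in\partial V$ such that $u_1(x_0)\le u_i(x)$ for all $x\in U$ and $i=1,2$ (i.e. $u_1(x_0)=\min_{i=1,2}\min_{U}u_i$), and $u_1(x_0)<u_i(x)$ for all $x\in V$ and $i=1,2$. Assume further that $V$ satisfies the interior ball condition at $x_0$: there is an open ball $B=B(\bar x,R)\subset V$ with $x_0\in\partial B$. Let $\nu(x_0)=(x_0-\bar x)/|x_0-\bar x|$ be the outward unit normal at $x_0$. Then $$\liminf_{s\to0^+}\frac{u_1(x_0-s\nu(x_0))-u_1(x_0)}{s}>0.$$
   Context: For $\varphi\in C^2$ near $x$, set $\Delta_\infty\varphi(x)=|D\varphi(x)|^{-2}\sum_{k,l=1}^n\varphi_{x_k}\varphi_{x_l}\varphi_{x_kx_l}(x)$ when $D\varphi(x)\neq0$. Define $\Delta_\infty^+\varphi(x)=\Delta_\infty\varphi(x)$ if $D\varphi(x)\ne0$ and $\Delta_\infty^+\varphi(x)=\max\{D^2\varphi(x)v\cdot v: v\in\mathbb{S}^{n-1}\}$ if $D\varphi(x)=0$; define $\Delta_\infty^-\varphi(x)$ in the same way with $\min$ in place of $\max$. The system (S) on an open set $\Omega$ is: $-\Delta_\infty u_1+u_1-u_2=0$ and $-\Delta_\infty u_2+u_2-u_1=0$ in $\Omega$. A pair $(u_1,u_2)$ of upper semicontinuous functions on $\Omega$ is a viscosity subsolution of (S)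 in $\Omega$ if for each $i\in\{1,2\}$, $j=3-i$, and each $\varphi\in C^2(\Omega)$ such that $u_i-\varphi$ has a local maximum at $x_0\in\Omega$, one has $-\Delta_\infty^+\varphi(x_0)+u_i(x_0)-u_j(x_0)\le0$. A pair of lower semicontinuous functions on $\Omega$ is a viscosity supersolution if for each $i$, $j=3-i$, and each $\varphi\in C^2(\Omega)$ such that $u_i-\varphi$ has a local minimum at $x_0\in\Omega$, one has $-\Delta_\infty^-\varphi(x_0)+u_i(x_0)-u_j(x_0)\ge0$. A viscosity solution is a pair that is both a subsolution and a supersolution. *)

(* Defs.v *)
From Stdlib Require Import Reals Lra.
From Stdlib Require Fin.
Open Scope R_scope.

Definition vec (n : nat) := Fin.t n -> R.

Fixpoint fsum (n : nat) : (Fin.t n -> R) -> R :=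
  match n with
  | O => fun _ => 0
  | S m => fun f => f Fin.F1 + fsum m (fun i => f (Fin.FS i))
  end.

Definition dot {n} (x y : vec n) : R := fsum n (fun k => x k * y k).
Definition vnorm {n} (x : vec n) : R := sqrt (dot x x).
Definition vsub {n} (x y : vec n) : vec n := fun k => x k - y k.
Definition vscale {n} (a : R) (x : vec n) : vec n := fun k => a * x k.
Definition rn_dist {n} (x y : vec n) : R := vnorm (vsub x y).

Definition rn_is_open {n} (S : vec n -> Prop) : Prop :=
  forall x, S x -> exists r, r > 0 /\ forall y, rn_dist y x < r -> S y.
Definition rn_closure {n} (S : vec n -> Prop) (x : vec n) : Prop :=
  forall eps, eps > 0 -> exists y, S y /\ rn_dist y x < eps.
Definition rn_boundary {n} (S : vec n -> Prop) (x : vec n) : Prop :=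
  rn_closure S x /\ ~ S x.
Definition rn_bounded {n} (S : vec n -> Prop) : Prop :=
  exists M, forall x, S x -> vnorm x <= M.
Definition rn_connected {n} (S : vec n -> Prop) : Prop :=
  ~ exists A B : vec n -> Prop,
      rn_is_open A /\ rn_is_open B /\
      (forall x, S x -> A x \/ B x) /\
      (forall x, S x -> A x -> B x -> False) /\
      (exists x, S x /\ A x) /\ (exists x, S x /\ B x).
Definition rn_domain {n} (S : vec n -> Prop) : Prop :=
  rn_is_open S /\ rn_connected S /\ exists x, S x.
Definition rn_open_ball {n} (c : vec n) (r : R) (y : vec n) : Prop := rn_dist y c < r.

Definition has_grad {n} (f : vec n -> R) (g : vec n) (x : vec n) : Prop :=
  forall eps, eps > 0 -> exists delta, delta > 0 /\
    forall y, rn_dist y x < delta ->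
      Rabs (f y - f x - dot g (vsub y x)) <= eps * rn_dist y x.

Definition continuous_on {n} (S : vec n -> Prop) (f : vec n -> R) : Prop :=
  forall x, S x -> forall eps, eps > 0 -> exists delta, delta > 0 /\
    forall y, S y -> rn_dist y x < delta -> Rabs (f y - f x) < eps.

Definition C2_on {n} (Om : vec n -> Prop) (phi : vec n -> R)
  (Dphi : vec n -> vec n) (D2phi : vec n -> Fin.t n -> Fin.t n -> R) : Prop :=
  (forall x, Om x -> has_grad phi (Dphi x) x) /\
  (forall x k, Om x -> has_grad (fun y => Dphi y k) (D2phi x k) x) /\
  (forall k l, continuous_on Om (fun y => D2phi y k l)).

Definition quad {n} (H : Fin.t n -> Fin.t n -> R) (v : vec n) : R :=
  dot (fun k => dot (H k) v) v.

(* m = Delta_infty^- phi(x), given gradient p = Dphi(x) and Hessian H = D2phi(x) *)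
Definition lap_inf_minus {n} (p : vec n) (H : Fin.t n -> Fin.t n -> R) (m : R) : Prop :=
  (p <> (fun _ => 0) /\
     m = / (vnorm p ^ 2) * fsum n (fun k => fsum n (fun l => p k * p l * H k l))) \/
  (p = (fun _ => 0) /\
     (exists v, vnorm v = 1 /\ quad H v = m) /\
     (forall v, vnorm v = 1 -> m <= quad H v)).

Definition lsc_on {n} (Om : vec n -> Prop) (u : vec n -> R) : Prop :=
  forall x, Om x -> forall eps, eps > 0 -> exists delta, delta > 0 /\
    forall y, Om y -> rn_dist y x < delta -> u y > u x - eps.

Definition local_min_at {n} (Om : vec n -> Prop) (f : vec n -> R) (x0 : vec n) : Prop :=
  exists r, r > 0 /\ forall y, Om y -> rn_dist y x0 < r -> f x0 <= f y.

(* supersolution condition for the i-th equation, ui the i-th, uj the other unknown *)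
Definition super_cond {n} (Om : vec n -> Prop) (ui uj : vec n -> R) : Prop :=
  forall phi Dphi D2phi x0, C2_on Om phi Dphi D2phi -> Om x0 ->
    local_min_at Om (fun x => ui x - phi x) x0 ->
    forall m, lap_inf_minus (Dphi x0) (D2phi x0) m ->
      - m + ui x0 - uj x0 >= 0.

Definition viscosity_supersolution {n} (Om : vec n -> Prop) (u1 u2 : vec n -> R) : Prop :=
  lsc_on Om u1 /\ lsc_on Om u2 /\ super_cond Om u1 u2 /\ super_cond Om u2 u1.

(* liminf_{s -> 0+} q(s) > a  (liminf taken in the extended reals) *)
Definition liminf_0plus_gt (q : R -> R) (a : R) : Prop :=
  exists c delta, c > a /\ delta > 0 /\ forall s, 0 < s < delta -> c <= q s.

(* Main.v *)
Require Import Defs.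
From Stdlib Require Import Reals Lra Psatz Rtopology ClassicalEpsilon Classical.
Open Scope R_scope.

Lemma fsum_ext n (f g : Fin.t n -> R) : (forall k, f k = g k) -> fsum n f = fsum n g.
Proof.
  revert f g; induction n; intros f g H; simpl; [reflexivity|].
  rewrite H, (IHn (fun i => f (Fin.FS i)) (fun i => g (Fin.FS i))); auto.
Qed.

Lemma fsum_plus n (f g : Fin.t n -> R) : fsum n (fun k => f k + g k) = fsum n f + fsum n g.
Proof.
  revert f g; induction n; intros f g; simpl; [lra|].
  rewrite (IHn (fun i => f (Fin.FS i)) (fun i => g (Fin.FS i))); lra.
Qed.

Lemma fsum_scal n c (f : Fin.t n -> R) : fsum n (fun k => c * f k) = c * fsum n f.
Proof.
  revert f; induction n; intros f; simpl; [lra|].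
  rewrite (IHn (fun i => f (Fin.FS i))); lra.
Qed.

Lemma fsum_zero n : fsum n (fun _ => 0) = 0.
Proof. induction n; simpl; [lra|]. rewrite IHn; lra. Qed.

Lemma fsum_nonneg n (f : Fin.t n -> R) : (forall k, 0 <= f k) -> 0 <= fsum n f.
Proof.
  revert f; induction n; intros f H; simpl; [lra|].
  specialize (IHn (fun i => f (Fin.FS i)) (fun i => H _)). specialize (H Fin.F1). lra.
Qed.

Lemma fsum_term n (f : Fin.t n -> R) k : (forall k, 0 <= f k) -> f k <= fsum n f.
Proof.
  revert f; induction k; intros f H; simpl.
  - pose proof (fsum_nonneg _ (fun i => f (Fin.FS i)) (fun i => H _)). lra.
  - specialize (IHk (fun i => f (Fin.FS i)) (fun i => H _)). specialize (H Fin.F1). simpl in IHk. lra.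
Qed.

Definition kd {n} (k l : Fin.t n) : R := if Fin.eq_dec k l then 1 else 0.

Lemma fsum_delta n (k : Fin.t n) (g : Fin.t n -> R) : fsum n (fun l => g l * kd k l) = g k.
Proof.
  revert g; induction k; intros g; simpl.
  - unfold kd. destruct (Fin.eq_dec Fin.F1 Fin.F1) as [_|C]; [|congruence].
    rewrite (fsum_ext _ _ (fun _ => 0)). rewrite fsum_zero; lra.
    intro i. destruct (Fin.eq_dec Fin.F1 (Fin.FS i)) as [E|_]; [discriminate E| lra].
  - unfold kd at 1. destruct (Fin.eq_dec (Fin.FS k) Fin.F1) as [E|_]; [discriminate E|].
    rewrite <- (IHk (fun i => g (Fin.FS i))).
    replace (g Fin.F1 * 0) with 0 by lra. rewrite Rplus_0_l.
    apply fsum_ext. intro i. unfold kd.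
    destruct (Fin.eq_dec (Fin.FS k) (Fin.FS i)) as [E|E]; destruct (Fin.eq_dec k i) as [E'|E']; try lra.
    + apply Fin.FS_inj in E. congruence.
    + subst. congruence.
Qed.

Lemma dot_nonneg n (x : vec n) : 0 <= dot x x.
Proof. unfold dot. apply fsum_nonneg. intro k. apply Rle_0_sqr. Qed.

Lemma dot_sym n (x y : vec n) : dot x y = dot y x.
Proof. unfold dot. apply fsum_ext. intro; ring. Qed.

Lemma dot_ext n (x x' y y' : vec n) : (forall k, x k = x' k) -> (forall k, y k = y' k) -> dot x y = dot x' y'.
Proof. intros H1 H2. unfold dot. apply fsum_ext. intro k; rewrite H1, H2; auto. Qed.

Lemma dot_addl n (x y z : vec n) : dot (fun k => x k + y k) z = dot x z + dot y z.
Proof. unfold dot. rewrite <- fsum_plus. apply fsum_ext; intro; ring. Qed.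

Lemma dot_scall n c (x z : vec n) : dot (fun k => c * x k) z = c * dot x z.
Proof. unfold dot. rewrite <- fsum_scal. apply fsum_ext; intro; ring. Qed.

Lemma dot_expand n a b (x y : vec n) :
  dot (fun k => a * x k + b * y k) (fun k => a * x k + b * y k)
  = a*a * dot x x + 2*a*b * dot x y + b*b * dot y y.
Proof.
  unfold dot. rewrite <- !fsum_scal, <- !fsum_plus. apply fsum_ext; intro; ring.
Qed.

Lemma CS2 n (x y : vec n) : dot x y * dot x y <= dot x x * dot y y.
Proof.
  pose proof (dot_nonneg _ x) as Ha. pose proof (dot_nonneg _ y) as Hb.
  set (A := dot x x) in *. set (B := dot y y) in *. set (C := dot x y).
  destruct (Req_dec B 0) as [HB|HB].
  - destruct (Req_dec C 0) as [HC|HC]. rewrite HC; nra.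
    exfalso. pose proof (dot_nonneg _ (fun k => 1 * x k + (- (A+1)/(2*C)) * y k)) as H.
    rewrite dot_expand in H. fold A B C in H. rewrite HB in H.
    assert (2 * 1 * (- (A + 1) / (2 * C)) * C = -(A+1)) by (field; auto). nra.
  - pose proof (dot_nonneg _ (fun k => B * x k + (- C) * y k)) as H.
    rewrite dot_expand in H. fold A B C in H.
    assert (0 < B) by lra. nra.
Qed.

Lemma vnorm_nonneg n (x : vec n) : 0 <= vnorm x.
Proof. apply sqrt_pos. Qed.

Lemma vnorm_sq n (x : vec n) : vnorm x * vnorm x = dot x x.
Proof. apply sqrt_sqrt, dot_nonneg. Qed.

Lemma CS n (x y : vec n) : Rabs (dot x y) <= vnorm x * vnorm y.
Proof.
  pose proof (CS2 _ x y). rewrite <- (vnorm_sq _ x), <- (vnorm_sq _ y) in H.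
  pose proof (vnorm_nonneg _ x). pose proof (vnorm_nonneg _ y).
  rewrite <- (Rabs_right (vnorm x * vnorm y)) by nra.
  apply Rsqr_le_abs_0. unfold Rsqr. nra.
Qed.

Lemma comp_le n (x : vec n) k : Rabs (x k) <= vnorm x.
Proof.
  assert (H : x k * x k <= dot x x).
  { unfold dot. apply (fsum_term _ (fun k => x k * x k)). intro; apply Rle_0_sqr. }
  rewrite <- vnorm_sq in H. pose proof (vnorm_nonneg _ x).
  rewrite <- (Rabs_right (vnorm x)) by lra.
  apply Rsqr_le_abs_0. unfold Rsqr. nra.
Qed.

Lemma vnorm_unique n (x : vec n) r : 0 <= r -> dot x x = r * r -> vnorm x = r.
Proof. intros H E. unfold vnorm. rewrite E. apply sqrt_square; auto. Qed.

Lemma vnorm_lt n (x : vec n) r : 0 < r -> dot x x < r * r -> vnorm x < r.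
Proof.
  intros H E. pose proof (vnorm_nonneg _ x). rewrite <- vnorm_sq in E.
  nra.
Qed.

Lemma triangle n (x y : vec n) : vnorm (fun k => x k + y k) <= vnorm x + vnorm y.
Proof.
  pose proof (vnorm_nonneg _ x). pose proof (vnorm_nonneg _ y).
  pose proof (vnorm_nonneg _ (fun k => x k + y k)).
  assert (E : dot (fun k => x k + y k) (fun k => x k + y k) = dot x x + 2 * dot x y + dot y y).
  { transitivity (dot (fun k => 1 * x k + 1 * y k) (fun k => 1 * x k + 1 * y k)).
    apply dot_ext; intro; ring. rewrite dot_expand; ring. }
  rewrite <- !vnorm_sq in E. pose proof (CS _ x y). pose proof (Rle_abs (dot x y)).
  nra.
Qed.

Lemma vdist_sym n (x y : vec n) : rn_dist x y = rn_dist y x.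
Proof. unfold rn_dist, vnorm. f_equal. unfold dot, vsub. apply fsum_ext; intro; ring. Qed.

Lemma vdist_tri n (x y z : vec n) : rn_dist x z <= rn_dist x y + rn_dist y z.
Proof.
  unfold rn_dist. rewrite <- (triangle n (vsub x y) (vsub y z)).
  right. unfold vnorm. f_equal. apply dot_ext; intro; unfold vsub; ring.
Qed.

Lemma Rabs_le_between a b : Rabs a <= b -> -b <= a <= b.
Proof. intros H. pose proof (Rle_abs a). pose proof (Rle_abs (-a)). rewrite Rabs_Ropp in H1. lra. Qed.

Lemma arch_eps eps : eps > 0 -> exists N, / INR (S N) < eps.
Proof.
  intros H. destruct (archimed_cor1 eps H) as [N [H1 H2]]. exists N.
  eapply Rle_lt_trans; [|exact H1]. apply Rinv_le_contravar.
  apply lt_0_INR; auto. apply le_INR; lia.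
Qed.

Lemma strict_mono_le (phi : nat -> nat) : (forall j, (phi j < phi (S j))%nat) ->
  forall a b, (a <= b)%nat -> (phi a <= phi b)%nat.
Proof. intros H a b Hab. induction Hab; auto. specialize (H m). lia. Qed.

Lemma strict_mono_lt (phi : nat -> nat) : (forall j, (phi j < phi (S j))%nat) ->
  forall a b, (a < b)%nat -> (phi a < phi b)%nat.
Proof. intros H a b Hab. pose proof (strict_mono_le phi H (S a) b Hab). specialize (H a). lia. Qed.

Lemma strict_mono_ge (phi : nat -> nat) : (forall j, (phi j < phi (S j))%nat) ->
  forall j, (j <= phi j)%nat.
Proof. intros H j. induction j. lia. specialize (H j). lia. Qed.

Lemma bw1 (u : nat -> R) M : (forall j, u j * u j <= M) ->
  exists (phi : nat -> nat) l, (forall j, (phi j < phi (S j))%nat) /\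
   (forall eps, eps > 0 -> exists N, forall j, (j >= N)%nat -> Rabs (u (phi j) - l) < eps).
Proof.
  intros HM.
  destruct (Bolzano_Weierstrass u (fun c => -(Rabs M+1) <= c <= Rabs M+1) (compact_P3 _ _)) as [l Hl].
  { intro j. cbv beta. specialize (HM j). pose proof (Rle_abs M). pose proof (Rabs_pos M).
    destruct (Rle_dec (Rabs (u j)) 1).
    - apply Rabs_le_between in r. lra.
    - assert (Rabs (u j) * Rabs (u j) <= Rabs M). { rewrite <- Rabs_mult. rewrite Rabs_right. lra. apply Rle_ge, Rle_0_sqr. }
      assert (H9: Rabs (u j) <= Rabs M + 1) by nra. apply Rabs_le_between in H9. lra. }
  assert (Hf : forall N j, exists p, (N <= p)%nat /\ Rabs (u p - l) < / INR (S j)).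
  { intros N j. assert (Hp : 0 < / INR (S j)) by (apply Rinv_0_lt_compat, lt_0_INR; lia).
    assert (NB: neighbourhood (disc l (mkposreal _ Hp)) l).
    { exists (mkposreal _ Hp). intros z Hz; exact Hz. }
    destruct (Hl (disc l (mkposreal _ Hp)) N NB) as [p [H1 H2]].
    exists p. split; [exact H1|exact H2]. }
  set (f := fun N j => proj1_sig (constructive_indefinite_description _ (Hf N j))).
  assert (Hf1 : forall N j, (N <= f N j)%nat /\ Rabs (u (f N j) - l) < / INR (S j)).
  { intros N j. unfold f. destruct (constructive_indefinite_description _ (Hf N j)); auto. }
  set (phi := nat_rect (fun _ => nat) (f 0%nat 0%nat) (fun j' p => f (S p) (S j'))).
  assert (Hphi : forall j, Rabs (u (phi j) - l) < / INR (S j)).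
  { intro j; destruct j; simpl; apply Hf1. }
  exists phi, l. split.
  - intro j. simpl. destruct (Hf1 (S (phi j)) (S j)). lia.
  - intros eps He. destruct (arch_eps eps He) as [N HN]. exists N. intros j Hj.
    eapply Rlt_le_trans. apply Hphi. left. eapply Rle_lt_trans; [|exact HN].
    apply Rinv_le_contravar. apply lt_0_INR; lia. apply le_INR; lia.
Qed.

Lemma bwn n : forall (x : nat -> vec n) M, (forall j, dot (x j) (x j) <= M) ->
  exists (phi : nat -> nat) (y : vec n), (forall j, (phi j < phi (S j))%nat) /\
  forall eps, eps > 0 -> exists N, forall j, (j >= N)%nat ->
     dot (vsub (x (phi j)) y) (vsub (x (phi j)) y) < eps.
Proof.
  induction n as [|m IH]; intros x M HM.
  - exists (fun j => j), (fun _ => 0). split. intro; lia.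
    intros eps He. exists 0%nat. intros. unfold dot; simpl. lra.
  - assert (H1 : forall j, x j Fin.F1 * x j Fin.F1 <= M).
    { intro j. specialize (HM j). unfold dot in HM; simpl in HM.
      pose proof (fsum_nonneg m (fun i => x j (Fin.FS i) * x j (Fin.FS i)) (fun i => Rle_0_sqr _)). lra. }
    destruct (bw1 _ _ H1) as [phi1 [l [Hp1 Hc1]]].
    set (xt := fun j => (fun i => x (phi1 j) (Fin.FS i)) : vec m).
    assert (H2 : forall j, dot (xt j) (xt j) <= M).
    { intro j. specialize (HM (phi1 j)). unfold dot in HM; simpl in HM. unfold dot, xt.
      pose proof (Rle_0_sqr (x (phi1 j) Fin.F1)). unfold Rsqr in H. lra. }
    destruct (IH xt M H2) as [phi2 [y' [Hp2 Hc2]]].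
    exists (fun j => phi1 (phi2 j)), (fun k => Fin.caseS' k (fun _ => R) l y').
    split.
    + intro j. apply strict_mono_lt; auto.
    + intros eps He.
      destruct (Hc1 (Rmin 1 (eps/2))) as [N1 HN1]. apply Rmin_pos; lra.
      destruct (Hc2 (eps/2)) as [N2 HN2]. lra.
      exists (max N1 N2). intros j Hj.
      specialize (HN2 j ltac:(lia)).
      assert (HH : (phi2 j >= N1)%nat). { pose proof (strict_mono_ge phi2 Hp2 j). lia. }
      specialize (HN1 _ HH).
      unfold dot in *; simpl. unfold vsub at 1 2; simpl.
      assert (E: fsum m (fun i => vsub (x (phi1 (phi2 j))) (fun k => Fin.caseS' k (fun _ => R) l y') (Fin.FS i) *
          vsub (x (phi1 (phi2 j))) (fun k => Fin.caseS' k (fun _ => R) l y') (Fin.FS i)) =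
          fsum m (fun k => vsub (xt (phi2 j)) y' k * vsub (xt (phi2 j)) y' k)).
      { apply fsum_ext. intro i. reflexivity. }
      rewrite E.
      assert (Rabs (x (phi1 (phi2 j)) Fin.F1 - l) * Rabs (x (phi1 (phi2 j)) Fin.F1 - l) < eps/2).
      { pose proof (Rmin_l 1 (eps/2)). pose proof (Rmin_r 1 (eps/2)). pose proof (Rabs_pos (x (phi1 (phi2 j)) Fin.F1 - l)). nra. }
      rewrite <- Rabs_mult, Rabs_right in H by (apply Rle_ge, Rle_0_sqr). lra.
Qed.

Lemma INR_unb r : exists N, r < INR N.
Proof.
  destruct (Rle_dec r 0). exists 1%nat. simpl. lra.
  destruct (arch_eps (/r)) as [N HN]. apply Rinv_0_lt_compat; lra.
  exists (S N). destruct (Rlt_dec r (INR (S N))); auto. exfalso.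
  assert (/ r <= / INR (S N)). apply Rinv_le_contravar. apply lt_0_INR; lia. lra. lra.
Qed.

Lemma choice_nat {A} (P : nat -> A -> Prop) : (forall j, exists x, P j x) -> exists f : nat -> A, forall j, P j (f j).
Proof.
  intros H. exists (fun j => proj1_sig (constructive_indefinite_description _ (H j))).
  intro j. destruct (constructive_indefinite_description _ (H j)); auto.
Qed.

Section LscMin.
Variable n : nat.
Variable K : vec n -> Prop.
Variable G : vec n -> R.
Variable c : vec n.
Variable b : R.
Hypothesis Hne : exists x, K x.
Hypothesis Hbd : forall x, K x -> dot (vsub x c) (vsub x c) <= b.
Hypothesis Hcl : forall y, (forall eps, eps > 0 -> exists x, K x /\ dot (vsub x y) (vsub x y) < eps) -> K y.
Hypothesis Hlsc : forall x, K x -> forall eps, eps > 0 -> exists delta, delta > 0 /\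
   forall y, K y -> dot (vsub y x) (vsub y x) < delta -> G y > G x - eps.

Lemma seq_compact (xs : nat -> vec n) : (forall j, K (xs j)) ->
  exists (phi : nat -> nat) y, K y /\ (forall j, (phi j < phi (S j))%nat) /\
  forall eps, eps > 0 -> exists N, forall j, (j >= N)%nat ->
     dot (vsub (xs (phi j)) y) (vsub (xs (phi j)) y) < eps.
Proof.
  intros HK.
  destruct (bwn n (fun j => vsub (xs j) c) b (fun j => Hbd _ (HK j))) as [phi [y' [Hp Hc]]].
  set (y := fun k => y' k + c k).
  assert (Hc' : forall eps, eps > 0 -> exists N, forall j, (j >= N)%nat ->
     dot (vsub (xs (phi j)) y) (vsub (xs (phi j)) y) < eps).
  { intros eps He. destruct (Hc eps He) as [N HN]. exists N. intros j Hj.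
    specialize (HN j Hj). erewrite dot_ext; [exact HN| |]; intro; unfold vsub, y; ring. }
  exists phi, y. split; [|split; auto].
  apply Hcl. intros eps He. destruct (Hc' eps He) as [N HN]. exists (xs (phi N)). split; auto.
Qed.

Lemma lsc_min : exists x, K x /\ forall y, K y -> G x <= G y.
Proof.
  destruct (classic (exists L, forall x, K x -> L <= G x)) as [[L HL]|HU].
  - set (E := fun r => exists x, K x /\ r = - G x).
    destruct (completeness E) as [m [Hub Hlub]].
    { exists (-L). intros r [x [Hx ->]]. specialize (HL x Hx). lra. }
    { destruct Hne as [x Hx]. exists (- G x). exists x; auto. }
    assert (HI : forall x, K x -> - m <= G x).
    { intros x Hx. assert (- G x <= m) by (apply Hub; exists x; auto). lra. }
    assert (Hseq : forall j, exists x, K x /\ G x < - m + / INR (S j)).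
    { intro j. apply NNPP. intro Hn.
      assert (Hpos : 0 < / INR (S j)) by (apply Rinv_0_lt_compat, lt_0_INR; lia).
      assert (m <= m - / INR (S j)).
      { apply Hlub. intros r [x [Hx ->]]. destruct (Rle_dec (- G x) (m - / INR (S j))); auto.
        exfalso. apply Hn. exists x. split; auto. lra. }
      lra. }
    destruct (choice_nat _ Hseq) as [xs Hxs].
    destruct (seq_compact xs (fun j => proj1 (Hxs j))) as [phi [y [Hy [Hp Hc]]]].
    exists y. split; auto. intros z Hz.
    enough (G y <= - m) by (specialize (HI z Hz); lra).
    destruct (Rle_dec (G y) (-m)) as [|Hgt]; auto. exfalso.
    set (eps := (G y + m) / 2).
    assert (He : eps > 0) by (unfold eps; lra).
    destruct (Hlsc y Hy eps He) as [delta [Hd Hl]].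
    destruct (Hc delta Hd) as [N1 HN1].
    destruct (arch_eps eps He) as [N2 HN2].
    set (j := max N1 N2).
    specialize (Hl (xs (phi j)) (proj1 (Hxs _)) (HN1 j ltac:(unfold j; lia))).
    pose proof (proj2 (Hxs (phi j))).
    assert (/ INR (S (phi j)) <= / INR (S N2)).
    { apply Rinv_le_contravar. apply lt_0_INR; lia. apply le_INR.
      pose proof (strict_mono_ge phi Hp j). unfold j in *. lia. }
    unfold eps in *. lra.
  - assert (Hseq : forall j, exists x, K x /\ G x < - INR j).
    { intro j. apply NNPP. intro Hn. apply HU. exists (- INR j). intros x Hx.
      destruct (Rle_dec (- INR j) (G x)); auto. exfalso. apply Hn. exists x. split; auto. lra. }
    destruct (choice_nat _ Hseq) as [xs Hxs].
    destruct (seq_compact xs (fun j => proj1 (Hxs j))) as [phi [y [Hy [Hp Hc]]]].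
    exfalso.
    destruct (Hlsc y Hy 1 ltac:(lra)) as [delta [Hd Hl]].
    destruct (Hc delta Hd) as [N1 HN1].
    destruct (INR_unb (1 - G y)) as [N2 HN2].
    set (j := max N1 N2).
    specialize (Hl (xs (phi j)) (proj1 (Hxs _)) (HN1 j ltac:(unfold j; lia))).
    pose proof (proj2 (Hxs (phi j))).
    assert (INR N2 <= INR (phi j)).
    { apply le_INR. pose proof (strict_mono_ge phi Hp j). unfold j in *. lia. }
    lra.
Qed.
End LscMin.

Definition tt {n} (xbar x : vec n) : R := dot (vsub x xbar) (vsub x xbar).
Definition psi {n} (A B C : R) (xbar x : vec n) : R := A + B * ((tt xbar x - C) * (tt xbar x - C)).
Definition Dpsi {n} (B C : R) (xbar x : vec n) : vec n :=
  fun k => 4 * B * (tt xbar x - C) * (x k - xbar k).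
Definition D2psi {n} (B C : R) (xbar x : vec n) : Fin.t n -> Fin.t n -> R :=
  fun k l => 8 * B * (x k - xbar k) * (x l - xbar l) + 4 * B * (tt xbar x - C) * kd k l.

Lemma kd_abs {n} (k l : Fin.t n) : Rabs (kd k l) <= 1.
Proof. unfold kd. destruct (Fin.eq_dec k l); rewrite ?Rabs_R1, ?Rabs_R0; lra. Qed.

Lemma grad_from_bound n (f : vec n -> R) g x K : 0 <= K ->
  (forall y, rn_dist y x <= 1 -> Rabs (f y - f x - dot g (vsub y x)) <= K * (rn_dist y x * rn_dist y x)) ->
  has_grad f g x.
Proof.
  intros HK H eps He. exists (Rmin 1 (eps / (K+1))). split.
  apply Rmin_pos; [lra|]. apply Rdiv_lt_0_compat; lra.
  intros y Hy. pose proof (Rmin_l 1 (eps/(K+1))). pose proof (Rmin_r 1 (eps/(K+1))).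
  pose proof (vnorm_nonneg _ (vsub y x)). fold (rn_dist y x) in H2.
  specialize (H y ltac:(lra)). eapply Rle_trans; [exact H|].
  assert (K * rn_dist y x <= eps).
  { assert (K * (eps/(K+1)) <= eps). { unfold Rdiv. apply (Rmult_le_reg_r (K+1)). lra.
      rewrite Rmult_assoc, Rmult_assoc, Rinv_l by lra. nra. }
    nra. }
  nra.
Qed.

Lemma cont_from_bound n (f : vec n -> R) x K : 0 <= K ->
  (forall y, rn_dist y x <= 1 -> Rabs (f y - f x) <= K * rn_dist y x) ->
  forall eps, eps > 0 -> exists delta, delta > 0 /\ forall y, rn_dist y x < delta -> Rabs (f y - f x) < eps.
Proof.
  intros HK H eps He. exists (Rmin 1 (eps / (K+1))). split.
  apply Rmin_pos; [lra|]. apply Rdiv_lt_0_compat; lra.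
  intros y Hy. pose proof (Rmin_l 1 (eps/(K+1))). pose proof (Rmin_r 1 (eps/(K+1))).
  pose proof (vnorm_nonneg _ (vsub y x)). fold (rn_dist y x) in H2.
  specialize (H y ltac:(lra)). eapply Rle_lt_trans; [exact H|].
  assert (K * (eps/(K+1)) < eps). { unfold Rdiv. apply (Rmult_lt_reg_r (K+1)). lra.
      rewrite Rmult_assoc, Rmult_assoc, Rinv_l by lra. nra. }
  nra.
Qed.

Lemma tt_decomp n (xbar x y : vec n) :
  tt xbar y = tt xbar x + 2 * dot (vsub x xbar) (vsub y x) + dot (vsub y x) (vsub y x).
Proof.
  unfold tt. transitivity (dot (fun k => 1 * vsub x xbar k + 1 * vsub y x k) (fun k => 1 * vsub x xbar k + 1 * vsub y x k)).
  apply dot_ext; intro; unfold vsub; ring. rewrite dot_expand. ring.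
Qed.

Section Bounds.
Variable n : nat.
Variables xbar x y : vec n.
Let nd := vnorm (vsub x xbar).
Let rho := rn_dist y x.
Let D := dot (vsub x xbar) (vsub y x).

Lemma rho_sq : dot (vsub y x) (vsub y x) = rho * rho.
Proof. unfold rho, rn_dist. rewrite vnorm_sq. auto. Qed.

Lemma D_bound : Rabs D <= nd * rho.
Proof. apply CS. Qed.

Lemma nd_nonneg : 0 <= nd. Proof. apply vnorm_nonneg. Qed.
Lemma rho_nonneg : 0 <= rho. Proof. apply vnorm_nonneg. Qed.

Lemma Delta_bound : rho <= 1 -> Rabs (tt xbar y - tt xbar x) <= (2 * nd + 1) * rho.
Proof.
  intros Hr. rewrite (tt_decomp n xbar x y), rho_sq. fold D.
  pose proof D_bound. pose proof nd_nonneg. pose proof rho_nonneg.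
  replace (tt xbar x + 2 * D + rho * rho - tt xbar x) with (2 * D + rho * rho) by ring.
  eapply Rle_trans. apply Rabs_triang. rewrite Rabs_mult, (Rabs_right 2) by lra.
  rewrite (Rabs_right (rho*rho)) by nra. nra.
Qed.
End Bounds.

Lemma abs_le_split a b : Rabs a <= b -> -b <= a <= b.
Proof. intros H. pose proof (Rle_abs a). pose proof (Rle_abs (-a)). rewrite Rabs_Ropp in H1. lra. Qed.

Lemma abs_le_of a b : -b <= a <= b -> Rabs a <= b.
Proof. apply Rabs_le. Qed.

Lemma abs_mul_le a b M : Rabs b <= M -> Rabs (a * b) <= Rabs a * M.
Proof. intros H. rewrite Rabs_mult. apply Rmult_le_compat_l; auto. apply Rabs_pos. Qed.

Lemma dot_Dpsi n B C (xbar x h : vec n) :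
  dot (Dpsi B C xbar x) h = 4 * B * (tt xbar x - C) * dot (vsub x xbar) h.
Proof.
  rewrite <- dot_scall. apply dot_ext; intro; unfold Dpsi, vsub; ring. 
Qed.

Lemma dot_D2psi n B C (xbar x h : vec n) k :
  dot (D2psi B C xbar x k) h = 8 * B * (x k - xbar k) * dot (vsub x xbar) h + 4 * B * (tt xbar x - C) * h k.
Proof.
  unfold dot, D2psi.
  rewrite (fsum_ext _ _ (fun l => (8 * B * (x k - xbar k)) * (vsub x xbar l * h l) + (4 * B * (tt xbar x - C) * h l) * kd k l)).
  rewrite fsum_plus, fsum_scal, (fsum_delta n k (fun l => 4 * B * (tt xbar x - C) * h l)). reflexivity.
  intro l. unfold vsub. ring.
Qed.

Lemma psi_grad n A B C (xbar x : vec n) : has_grad (psi A B C xbar) (Dpsi B C xbar x) x.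
Proof.
  set (nd := vnorm (vsub x xbar)). set (T := tt xbar x).
  apply (grad_from_bound _ _ _ _ (Rabs B * (2 * Rabs (T - C) + (2*nd+1)*(2*nd+1)))).
  { pose proof (Rabs_pos B). pose proof (Rabs_pos (T-C)). pose proof (vnorm_nonneg _ (vsub x xbar)). fold nd in H1. nra. }
  intros y Hy. set (rho := rn_dist y x) in *.
  pose proof (Delta_bound n xbar x y Hy) as HD. fold nd rho T in HD.
  pose proof (rho_sq n x y) as Hr. fold rho in Hr.
  pose proof (tt_decomp n xbar x y) as Ht. fold T in Ht.
  pose proof (rho_nonneg n x y). fold rho in H.
  pose proof (vnorm_nonneg _ (vsub x xbar)). fold nd in H0.
  set (Ty := tt xbar y) in *.
  assert (E : psi A B C xbar y - psi A B C xbar x - dot (Dpsi B C xbar x) (vsub y x)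
     = B * (2 * (T - C) * (rho * rho) + (Ty - T) * (Ty - T))).
  { rewrite dot_Dpsi. unfold psi. fold T Ty. rewrite Ht, Hr. ring. }
  rewrite E. replace ((Rabs B) * (2 * Rabs (T - C) + (2 * nd + 1) * (2 * nd + 1)) * (rho * rho))
    with (Rabs B * ((2 * Rabs (T - C) + (2 * nd + 1) * (2 * nd + 1)) * (rho * rho))) by ring.
  apply abs_mul_le. eapply Rle_trans. apply Rabs_triang.
  rewrite !Rabs_mult. rewrite (Rabs_right 2) by lra. rewrite (Rabs_right rho) by lra.
  pose proof (Rabs_pos (Ty - T)). pose proof (Rabs_pos (T-C)).
  assert (Rabs (Ty - T) * Rabs (Ty - T) <= ((2*nd+1)*rho) * ((2*nd+1)*rho)) by nra.
  nra.
Qed.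

Lemma Dpsi_grad n B C (xbar x : vec n) k :
  has_grad (fun y => Dpsi B C xbar y k) (D2psi B C xbar x k) x.
Proof.
  set (nd := vnorm (vsub x xbar)). set (T := tt xbar x).
  apply (grad_from_bound _ _ _ _ (4 * Rabs B * (3 * nd + 1))).
  { pose proof (Rabs_pos B). pose proof (vnorm_nonneg _ (vsub x xbar)). fold nd in H0. nra. }
  intros y Hy. set (rho := rn_dist y x) in *.
  pose proof (Delta_bound n xbar x y Hy) as HD. fold nd rho T in HD.
  pose proof (rho_sq n x y) as Hr. fold rho in Hr.
  pose proof (tt_decomp n xbar x y) as Ht. fold T in Ht.
  pose proof (rho_nonneg n x y). fold rho in H.
  pose proof (vnorm_nonneg _ (vsub x xbar)). fold nd in H0.
  pose proof (comp_le _ (vsub x xbar) k) as Hdk. fold nd in Hdk.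
  pose proof (comp_le _ (vsub y x) k) as Hhk. fold (rn_dist y x) rho in Hhk.
  set (Ty := tt xbar y) in *.
  assert (E : Dpsi B C xbar y k - Dpsi B C xbar x k - dot (D2psi B C xbar x k) (vsub y x)
     = (4 * B) * ((rho * rho) * vsub x xbar k + (Ty - T) * vsub y x k)).
  { rewrite dot_D2psi. unfold Dpsi. fold T Ty. rewrite Ht, Hr. unfold vsub. ring. }
  rewrite E. replace (4 * Rabs B * (3 * nd + 1) * (rho * rho))
    with (Rabs (4*B) * ((3 * nd + 1) * (rho * rho))) by (rewrite Rabs_mult, (Rabs_right 4) by lra; ring).
  apply abs_mul_le. eapply Rle_trans. apply Rabs_triang.
  rewrite !Rabs_mult. rewrite (Rabs_right rho) by lra.
  pose proof (Rabs_pos (Ty - T)). pose proof (Rabs_pos (vsub y x k)). pose proof (Rabs_pos (vsub x xbar k)).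
  assert (Rabs (Ty - T) * Rabs (vsub y x k) <= ((2*nd+1)*rho) * rho).
  { apply Rmult_le_compat; auto. }
  assert (rho * rho * Rabs (vsub x xbar k) <= rho * rho * nd).
  { apply Rmult_le_compat_l; auto. nra. }
  nra.
Qed.

Lemma D2psi_cont n B C (xbar : vec n) k l (Om : vec n -> Prop) :
  continuous_on Om (fun y => D2psi B C xbar y k l).
Proof.
  intros x _ eps He.
  set (nd := vnorm (vsub x xbar)). set (T := tt xbar x).
  destruct (cont_from_bound _ (fun y => D2psi B C xbar y k l) x (12 * Rabs B * (2 * nd + 1))) with (eps := eps)
    as [delta [Hd Hdl]]; auto.
  { pose proof (Rabs_pos B). pose proof (vnorm_nonneg _ (vsub x xbar)). fold nd in H0. nra. }
  2: { exists delta; split; auto. }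
  intros y Hy. set (rho := rn_dist y x) in *.
  pose proof (Delta_bound n xbar x y Hy) as HD. fold nd rho T in HD.
  pose proof (rho_nonneg n x y). fold rho in H.
  pose proof (vnorm_nonneg _ (vsub x xbar)). fold nd in H0.
  pose proof (comp_le _ (vsub x xbar) k) as Hdk. fold nd in Hdk.
  pose proof (comp_le _ (vsub x xbar) l) as Hdl. fold nd in Hdl.
  pose proof (comp_le _ (vsub y x) k) as Hhk. fold (rn_dist y x) rho in Hhk.
  pose proof (comp_le _ (vsub y x) l) as Hhl. fold (rn_dist y x) rho in Hhl.
  set (Ty := tt xbar y) in *.
  assert (E : D2psi B C xbar y k l - D2psi B C xbar x k l =
     (8 * B) * (vsub x xbar k * vsub y x l + vsub y x k * vsub x xbar l + vsub y x k * vsub y x l)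
     + (4 * B) * ((Ty - T) * kd k l)).
  { unfold D2psi. fold T Ty. unfold vsub. ring. }
  rewrite E. eapply Rle_trans. apply Rabs_triang.
  rewrite !Rabs_mult, (Rabs_right 8), (Rabs_right 4) by lra.
  pose proof (kd_abs k l). pose proof (Rabs_pos (kd k l)). pose proof (Rabs_pos B).
  pose proof (Rabs_pos (Ty - T)).
  assert (Rabs (Ty - T) * Rabs (kd k l) <= (2*nd+1)*rho).
  { replace ((2*nd+1)*rho) with (((2*nd+1)*rho)*1) by ring. apply Rmult_le_compat; auto. }
  assert (Rabs (vsub x xbar k * vsub y x l + vsub y x k * vsub x xbar l + vsub y x k * vsub y x l) <= (2*nd+1)*rho).
  { eapply Rle_trans. apply Rabs_triang. eapply Rle_trans. apply Rplus_le_compat_r. apply Rabs_triang.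
    rewrite !Rabs_mult.
    pose proof (Rabs_pos (vsub x xbar k)). pose proof (Rabs_pos (vsub x xbar l)).
    pose proof (Rabs_pos (vsub y x k)). pose proof (Rabs_pos (vsub y x l)).
    assert (Rabs (vsub x xbar k) * Rabs (vsub y x l) <= nd * rho) by (apply Rmult_le_compat; auto).
    assert (Rabs (vsub y x k) * Rabs (vsub x xbar l) <= rho * nd) by (apply Rmult_le_compat; auto).
    assert (Rabs (vsub y x k) * Rabs (vsub y x l) <= rho * 1) by (apply Rmult_le_compat; auto; exact (Rle_trans _ _ _ Hhl Hy)).
    nra. }
  nra.
Qed.

Lemma psi_C2 n A B C (xbar : vec n) (Om : vec n -> Prop) :
  C2_on Om (psi A B C xbar) (Dpsi B C xbar) (D2psi B C xbar).
Proof.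
  split; [|split].
  - intros x _. apply psi_grad.
  - intros x k _. apply Dpsi_grad.
  - intros k l. apply D2psi_cont.
Qed.

Lemma psi_cont n A B C (xbar x : vec n) : forall eps, eps > 0 -> exists delta, delta > 0 /\
  forall y, rn_dist y x < delta -> Rabs (psi A B C xbar y - psi A B C xbar x) < eps.
Proof.
  set (nd := vnorm (vsub x xbar)). set (T := tt xbar x).
  apply (cont_from_bound _ _ x (Rabs B * (2 * Rabs (T - C) * (2 * nd + 1) + (2*nd+1)*(2*nd+1)))).
  { apply Rmult_le_pos; [apply Rabs_pos|]. pose proof (Rabs_pos (T-C)). pose proof (vnorm_nonneg _ (vsub x xbar)). fold nd in H0. nra. }
  intros y Hy. set (rho := rn_dist y x) in *.
  pose proof (Delta_bound n xbar x y Hy) as HD. fold nd rho T in HD.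
  pose proof (rho_nonneg n x y). fold rho in H.
  pose proof (vnorm_nonneg _ (vsub x xbar)). fold nd in H0.
  set (Ty := tt xbar y) in *.
  assert (E : psi A B C xbar y - psi A B C xbar x = B * (2 * (T - C) * (Ty - T) + (Ty - T) * (Ty - T))).
  { unfold psi. fold T Ty. ring. }
  rewrite E. replace (Rabs B * (2 * Rabs (T - C) * (2 * nd + 1) + (2 * nd + 1) * (2 * nd + 1)) * rho)
    with (Rabs B * ((2 * Rabs (T - C) * (2 * nd + 1) + (2 * nd + 1) * (2 * nd + 1)) * rho)) by ring.
  apply abs_mul_le. eapply Rle_trans. apply Rabs_triang.
  rewrite !Rabs_mult, (Rabs_right 2) by lra.
  pose proof (Rabs_pos (Ty - T)). pose proof (Rabs_pos (T-C)).
  assert (Rabs (Ty - T) * Rabs (Ty - T) <= ((2*nd+1)*rho) * ((2*nd+1)*1)).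
  { apply Rmult_le_compat; auto. nra. }
  assert (Rabs (T - C) * Rabs (Ty - T) <= Rabs (T-C) * ((2*nd+1)*rho)) by (apply Rmult_le_compat_l; auto).
  nra.
Qed.

Lemma tt_cont n (xbar x : vec n) : forall eps, eps > 0 -> exists delta, delta > 0 /\
  forall y, rn_dist y x < delta -> Rabs (tt xbar y - tt xbar x) < eps.
Proof.
  apply (cont_from_bound _ _ x (2 * vnorm (vsub x xbar) + 1)).
  pose proof (vnorm_nonneg _ (vsub x xbar)). lra.
  intros y Hy. apply Delta_bound; auto.
Qed.

Lemma lap_psi n B C (xbar x : vec n) : B <> 0 -> tt xbar x <> C -> tt xbar x > 0 ->
  lap_inf_minus (Dpsi B C xbar x) (D2psi B C xbar x) (8*B*tt xbar x + 4*B*(tt xbar x - C)).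
Proof.
  intros HB HC HT.
  set (T := tt xbar x) in *. set (c := 4 * B * (T - C)). set (d := vsub x xbar).
  assert (Hc : c <> 0). { unfold c. intro H. apply Rmult_integral in H. destruct H as [H|H]. lra. lra. }
  assert (Hp : Dpsi B C xbar x = fun k => c * d k) by reflexivity.
  assert (Hdd : dot d d = T) by reflexivity.
  assert (Hpp : dot (Dpsi B C xbar x) (Dpsi B C xbar x) = c * c * T).
  { rewrite Hp, dot_scall, dot_sym, dot_scall, Hdd. ring. }
  left. split.
  - intro Hz. rewrite Hz in Hpp. unfold dot in Hpp.
    rewrite (fsum_ext _ _ (fun _ => 0)) in Hpp by (intro; ring). rewrite fsum_zero in Hpp.
    assert (c * c > 0) by (apply Rsqr_pos_lt; auto). nra.
  - assert (Hn2 : vnorm (Dpsi B C xbar x) ^ 2 = c * c * T).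
    { rewrite <- Hpp, <- vnorm_sq. ring. }
    rewrite Hn2.
    rewrite (fsum_ext _ _ (fun k => (8*B*T + 4*B*(T-C)) * c * c * (d k * d k))).
    2: { intro k. unfold D2psi. fold T.
      rewrite (fsum_ext _ _ (fun l => (8*B*c*c*d k*d k) * (d l * d l) + (4*B*(T-C)*c*c*d k * d l) * kd k l)).
      2: { intro l. rewrite Hp. unfold d, vsub. ring. }
      rewrite fsum_plus, fsum_scal, (fsum_delta n k (fun l => 4*B*(T-C)*c*c*d k * d l)).
      change (fsum n (fun l => d l * d l)) with (dot d d). rewrite Hdd. ring. }
    rewrite fsum_scal. change (fsum n (fun k => d k * d k)) with (dot d d). rewrite Hdd.
    replace (4*B*(T-C)) with c by (unfold c; ring). field. split; auto; lra.
Qed.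

Lemma dist_lt_of_dot n (x y : vec n) d : d > 0 -> dot (vsub x y) (vsub x y) < d * d -> rn_dist x y < d.
Proof. intros. apply vnorm_lt; auto. Qed.

Lemma ann_min n (U : vec n -> Prop) (u1 u2 : vec n -> R) xbar a b A B C :
  (forall x, tt xbar x <= b -> U x) -> lsc_on U u1 -> lsc_on U u2 ->
  (exists x, a <= tt xbar x <= b) ->
  exists z, (a <= tt xbar z <= b) /\ forall y, a <= tt xbar y <= b ->
     Rmin (u1 z) (u2 z) - psi A B C xbar z <= Rmin (u1 y) (u2 y) - psi A B C xbar y.
Proof.
  intros HU H1 H2 Hne.
  apply (lsc_min n (fun x => a <= tt xbar x <= b) _ xbar b Hne).
  - intros x Hx. unfold tt in Hx. lra.
  - intros y Hy.
    assert (Hgap : forall g, g > 0 -> exists x, a <= tt xbar x <= b /\ Rabs (tt xbar x - tt xbar y) < g).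
    { intros g Hg. destruct (tt_cont n xbar y g Hg) as [d [Hd Hdd]].
      destruct (Hy (d*d)) as [x [Hx Hxd]]. nra.
      exists x. split; auto. apply Hdd. apply dist_lt_of_dot; auto. }
    split.
    + destruct (Rle_dec a (tt xbar y)) as [|Hn]; auto. exfalso.
      destruct (Hgap (a - tt xbar y)) as [x [Hx Hxa]]. lra.
      apply Rabs_def2 in Hxa. lra.
    + destruct (Rle_dec (tt xbar y) b) as [|Hn]; auto. exfalso.
      destruct (Hgap (tt xbar y - b)) as [x [Hx Hxa]]. lra.
      apply Rabs_def2 in Hxa. lra.
  - intros x Hx eps He.
    assert (Ux : U x) by (apply HU; lra).
    destruct (H1 x Ux (eps/3)) as [d1 [Hd1 Hl1]]. lra.
    destruct (H2 x Ux (eps/3)) as [d2 [Hd2 Hl2]]. lra.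
    destruct (psi_cont n A B C xbar x (eps/3)) as [d3 [Hd3 Hl3]]. lra.
    set (d := Rmin d1 (Rmin d2 d3)).
    assert (Hd : d > 0) by (unfold d; repeat apply Rmin_pos; lra).
    exists (d * d). split. nra.
    intros y Hy Hyd. apply dist_lt_of_dot in Hyd; auto.
    assert (Uy : U y) by (apply HU; lra).
    pose proof (Rmin_l d1 (Rmin d2 d3)). pose proof (Rmin_r d1 (Rmin d2 d3)).
    pose proof (Rmin_l d2 d3). pose proof (Rmin_r d2 d3). fold d in H, H0.
    specialize (Hl1 y Uy ltac:(lra)). specialize (Hl2 y Uy ltac:(lra)).
    specialize (Hl3 y ltac:(lra)). apply Rabs_def2 in Hl3.
    unfold Rmin; destruct (Rle_dec (u1 y) (u2 y)); destruct (Rle_dec (u1 x) (u2 x)); lra.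
Qed.

Lemma key_step n (U : vec n -> Prop) (ui uj : vec n -> R) A eps C xbar xh :
  super_cond U ui uj -> U xh -> eps > 0 -> tt xbar xh <> C -> tt xbar xh > 0 ->
  local_min_at U (fun x => ui x - psi A eps C xbar x) xh ->
  8*eps*tt xbar xh + 4*eps*(tt xbar xh - C) > 0 ->
  ui xh <= uj xh -> False.
Proof.
  intros Hs HU He HC HT Hloc Hpos Hij.
  pose proof (Hs (psi A eps C xbar) (Dpsi eps C xbar) (D2psi eps C xbar) xh (psi_C2 n A eps C xbar U) HU Hloc
     _ (lap_psi n eps C xbar xh ltac:(lra) HC HT)).
  lra.
Qed.

Lemma tt_scaled n (xbar x : vec n) lam (y : vec n) :
  (forall k, y k - xbar k = lam * (x k - xbar k)) -> tt xbar y = lam * lam * tt xbar x.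
Proof.
  intros Hy. unfold tt.
  transitivity (dot (fun k => lam * vsub x xbar k) (fun k => lam * vsub x xbar k)).
  apply dot_ext; intro k; unfold vsub; rewrite Hy; ring.
  rewrite dot_scall, dot_sym, dot_scall. ring.
Qed.

Theorem mainTheorem1 (n : nat) (U V : vec n -> Prop) (u1 u2 : vec n -> R)
  (x0 xbar : vec n) (Rad : R) :
  rn_domain U -> rn_bounded U -> rn_is_open V ->
  (forall x, rn_closure V x -> U x) ->
  viscosity_supersolution U u1 u2 ->
  rn_boundary V x0 ->
  (forall x, U x -> u1 x0 <= u1 x /\ u1 x0 <= u2 x) ->
  (forall x, V x -> u1 x0 < u1 x /\ u1 x0 < u2 x) ->
  Rad > 0 -> (forall y, rn_open_ball xbar Rad y -> V y) ->
  rn_boundary (rn_open_ball xbar Rad) x0 ->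
  let nu := vscale (/ rn_dist x0 xbar) (vsub x0 xbar) in
  liminf_0plus_gt (fun s => (u1 (vsub x0 (vscale s nu)) - u1 x0) / s) 0.
Proof.
  intros _ _ _ HclU [Hl1 [Hl2 [Hs1 Hs2]]] _ Hmin Hstr HR Hball [Hx0c Hx0n] nu.
  set (R2 := Rad * Rad). set (m := u1 x0).
  assert (HR2 : R2 > 0) by (unfold R2; nra).
  assert (F1 : forall y, tt xbar y < R2 -> V y).
  { intros y Hy. apply Hball. unfold rn_open_ball, rn_dist. apply vnorm_lt; auto. }
  assert (F2 : forall y, tt xbar y <= R2 -> U y).
  { intros y Hy. apply HclU. intros eps He.
    set (eta := Rmin (1/2) (eps / (2 * (Rad + 1)))).
    assert (Heta : 0 < eta) by (unfold eta; apply Rmin_pos; [lra| apply Rdiv_lt_0_compat; lra]).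
    assert (Heta1 : eta <= 1/2) by apply Rmin_l.
    assert (Heta2 : eta * (2 * (Rad + 1)) <= eps).
    { pose proof (Rmin_r (1/2) (eps / (2 * (Rad + 1)))). fold eta in H.
      apply (Rmult_le_compat_r (2 * (Rad+1))) in H; [|lra].
      unfold Rdiv in H. rewrite Rmult_assoc, Rinv_l, Rmult_1_r in H by lra. lra. }
    set (y' := fun k => xbar k + (1 - eta) * (y k - xbar k)).
    exists y'. split.
    - apply F1. rewrite (tt_scaled n xbar y (1 - eta)) by (intro; unfold y'; ring).
      pose proof (dot_nonneg _ (vsub y xbar)). fold (tt xbar y) in H.
      assert ((1-eta)*(1-eta) < 1) by nra. nra.
    - unfold rn_dist. apply vnorm_lt; auto.
      assert (E : dot (vsub y' y) (vsub y' y) = eta * eta * tt xbar y).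
      { unfold tt.
        transitivity (dot (fun k => (-eta) * vsub y xbar k) (fun k => (-eta) * vsub y xbar k)).
        apply dot_ext; intro k; unfold vsub, y'; ring.
        rewrite dot_scall, dot_sym, dot_scall. ring. }
      rewrite E. pose proof (dot_nonneg _ (vsub y xbar)). fold (tt xbar y) in H.
      assert (H1 : eta * Rad < eps) by nra.
      assert (H2 : eta * eta * tt xbar y <= eta * eta * R2) by (apply Rmult_le_compat_l; nra).
      assert (H3 : (eta * Rad) * (eta * Rad) < eps * eps).
      { pose proof (Rmult_le_pos eta Rad ltac:(lra) ltac:(lra)). nra. }
      unfold R2 in H2. nra. }
  assert (Hd0 : rn_dist x0 xbar = Rad).
  { unfold rn_open_ball in Hx0n.
    assert (rn_dist x0 xbar <= Rad).
    { destruct (Rle_dec (rn_dist x0 xbar) Rad) as [|Hn]; auto. exfalso.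
      destruct (Hx0c (rn_dist x0 xbar - Rad)) as [y [Hy1 Hy2]]. lra.
      unfold rn_open_ball in Hy1. pose proof (vdist_tri n x0 y xbar). rewrite (vdist_sym n x0 y) in H. lra. }
    lra. }
  assert (F3 : tt xbar x0 = R2).
  { unfold tt. rewrite <- vnorm_sq. fold (rn_dist x0 xbar). rewrite Hd0. reflexivity. }
  assert (Tnn : forall x, 0 <= tt xbar x) by (intro; apply dot_nonneg).
  destruct (ann_min n U u1 u2 xbar 0 (3/4 * R2) 0 0 0) as [z [Hz Hzmin]].
  { intros x Hx. apply F2. lra. } auto. auto.
  { exists xbar. unfold tt. rewrite (dot_ext _ _ (fun _ => 0) _ (fun _ => 0)) by (intro; unfold vsub; ring).
    unfold dot. rewrite (fsum_ext _ _ (fun _ => 0)) by (intro; ring). rewrite fsum_zero. lra. }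
  assert (Hpsi0 : forall x, psi 0 0 0 xbar x = 0) by (intro; unfold psi; ring).
  set (delta := Rmin (u1 z) (u2 z) - m).
  assert (Hdel : delta > 0).
  { destruct (Hstr z (F1 z ltac:(lra))). unfold delta, m, Rmin. destruct (Rle_dec (u1 z) (u2 z)); lra. }
  assert (Hin : forall x, tt xbar x <= 3/4 * R2 -> Rmin (u1 x) (u2 x) - m >= delta).
  { intros x Hx. specialize (Hzmin x ltac:(split; [apply Tnn|exact Hx])). rewrite !Hpsi0 in Hzmin.
    unfold delta. lra. }
  set (eps := delta / (9/16 * (R2 * R2))).
  assert (Heps : eps > 0) by (unfold eps; apply Rdiv_lt_0_compat; nra).
  assert (Hepsd : eps * (9/16 * (R2 * R2)) = delta) by (unfold eps; field; lra).
  set (A := m - eps * (R2 * R2)). set (C := 2 * R2).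
  destruct (ann_min n U u1 u2 xbar (3/4 * R2) R2 A eps C) as [xh [Hxh Hxhmin]].
  { intros x Hx. apply F2. lra. } auto. auto.
  { exists x0. rewrite F3. lra. }
  set (G := fun x => Rmin (u1 x) (u2 x) - psi A eps C xbar x).
  assert (HG : G xh >= 0).
  { destruct (Rge_dec (G xh) 0) as [|Hneg]; auto. exfalso. apply Rnot_ge_lt in Hneg.
    unfold G in Hneg.
    assert (Uxh : U xh) by (apply F2; lra).
    destruct (Req_dec (tt xbar xh) R2) as [Eq|Neq1].
    { unfold psi in Hneg. rewrite Eq in Hneg. destruct (Hmin xh Uxh) as [Hm1 Hm2]. fold m in Hm1, Hm2.
      unfold A, C, Rmin in Hneg. destruct (Rle_dec (u1 xh) (u2 xh)); nra. }
    destruct (Req_dec (tt xbar xh) (3/4 * R2)) as [Eq|Neq2].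
    { unfold psi in Hneg. pose proof (Hin xh ltac:(lra)). rewrite Eq in Hneg.
      unfold A, C in Hneg. nra. }
    assert (Hint : 3/4 * R2 < tt xbar xh < R2) by lra.
    destruct (tt_cont n xbar xh (Rmin (tt xbar xh - 3/4*R2) (R2 - tt xbar xh))) as [r [Hr Hrl]].
    { apply Rmin_pos; lra. }
    assert (Hloc : forall y, rn_dist y xh < r -> G xh <= G y).
    { intros y Hy. apply Hxhmin. specialize (Hrl y Hy). apply Rabs_def2 in Hrl.
      pose proof (Rmin_l (tt xbar xh - 3/4*R2) (R2 - tt xbar xh)).
      pose proof (Rmin_r (tt xbar xh - 3/4*R2) (R2 - tt xbar xh)). lra. }
    assert (HTne : tt xbar xh <> C) by (unfold C; lra).
    assert (HTp : tt xbar xh > 0) by lra.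
    assert (Hm' : 8*eps*tt xbar xh + 4*eps*(tt xbar xh - C) > 0) by (unfold C; nra).
    destruct (Rle_dec (u1 xh) (u2 xh)) as [H12|H21].
    - apply (key_step n U u1 u2 A eps C xbar xh Hs1 Uxh Heps HTne HTp); auto.
      exists r. split; auto. intros y Uy Hy. specialize (Hloc y Hy). unfold G, Rmin in Hloc.
      destruct (Rle_dec (u1 xh) (u2 xh)); [|contradiction].
      destruct (Rle_dec (u1 y) (u2 y)); lra.
    - apply (key_step n U u2 u1 A eps C xbar xh Hs2 Uxh Heps HTne HTp); [| |lra].
      exists r. split; auto. intros y Uy Hy. specialize (Hloc y Hy). unfold G, Rmin in Hloc.
      destruct (Rle_dec (u1 xh) (u2 xh)); [contradiction|].
      destruct (Rle_dec (u1 y) (u2 y)); lra. auto. }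
  exists (2 * eps * (Rad * Rad * Rad)), (Rad / 8). split; [|split].
  - assert (Rad * Rad * Rad > 0) by (apply Rmult_lt_0_compat; nra). nra.
  - lra.
  - intros s Hs.
    set (y := vsub x0 (vscale s nu)).
    assert (Ty : tt xbar y = (Rad - s) * (Rad - s)).
    { rewrite (tt_scaled n xbar x0 (1 - s / Rad)).
      rewrite F3. unfold R2. field. lra.
      intro k. unfold y, nu, vsub, vscale. rewrite Hd0. field. lra. }
    assert (HyK : 3/4 * R2 <= tt xbar y <= R2) by (rewrite Ty; unfold R2; nra).
    specialize (Hxhmin y HyK). fold (G xh) (G y) in Hxhmin.
    assert (Gy : G y >= 0) by lra.
    unfold G, psi in Gy. rewrite Ty in Gy.
    assert (Hu1 : u1 y - m >= eps * (((Rad - s) * (Rad - s) - C) * ((Rad - s) * (Rad - s) - C)) - eps * (R2 * R2)).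
    { unfold A in Gy. pose proof (Rmin_l (u1 y) (u2 y)). lra. }
    assert (Hq : ((Rad - s) * (Rad - s) - C) * ((Rad - s) * (Rad - s) - C) - R2 * R2 >= 2 * (Rad * Rad * Rad) * s).
    { unfold C, R2.
      replace (((Rad - s) * (Rad - s) - 2 * (Rad * Rad)) * ((Rad - s) * (Rad - s) - 2 * (Rad * Rad)) - Rad * Rad * (Rad * Rad))
        with ((2*Rad*s - s*s) * (2 * (Rad * Rad) + (2*Rad*s - s*s))) by ring.
      assert (2*Rad*s - s*s >= Rad * s) by nra.
      assert (Rad * s > 0) by nra.
      nra. }
    assert (E : (u1 y - m) / s * s = u1 y - m) by (field; lra).
    apply (Rmult_le_reg_r s). lra. fold y. fold m. rewrite E. nra.
Qed.
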